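(* Let $G$ be the loopless clique on $V=\{1,\dots,K\}$. For any sequence of loss functions $\ell_1,\dots,\ell_T$ with $\ell_t:V\to[0,1]$, the expected regret of the algorithm Exp3.G run with feedback graph $G$, exploration set $U=V$, and parameters $\eta=\sqrt{(\ln K)/(2T)}$ and $\gamma=2\eta$ is at most $5\sqrt{T\ln K}$.
   Context: The loopless clique on $V$ is the directed graph with edge set $\{(i,j):i,j\in V,\ i\ne j\}$ (no self-loops). For a directed graph $G=(V,E)$, $N^{\mathrm{in}}(i)=\{j:(j,i)\in E\}$, $N^{\mathrm{out}}(i)=\{j:(i,j)\in E\}$. Online learning with feedback graph $G$: the environment fixes in advance losses $\ell_t:V\to[0,1]$; on round $t$ the player draws $I_t$, incurs $\ell_t(I_t)$, and observes only $\{(j,\ell_t(j)):j\in N^{\mathrm{out}}(I_t)\}$. Expected regret: $\mathbb{E}[\sum_{t=1}^T\ell_t(I_t)]-\min_{i\in V}\sum_{t=1}^T\ell_t(i)$. Algorithm Exp3.G with parameters $G$, learning rate $\eta>0$, exploration set $U\subseteq V$, exploration rate $\gamma\in[0,1]$: let $u$ be uniform on $U$ and $q_1$ uniform on $V$. For $t=1,2,\dots$: $p_t=(1-\gamma)q_t+\gamma u$; draw $I_t\sim p_t$, play it and observe $\{(i,\ell_t(i)):i\in N^{\mathrm{out}}(I_t)\}$; set $\hat\ell_t(i)=\frac{\ell_t(i)}{P_t(i)}\mathbb{1}\{i\in N^{\mathrm{out}}(I_t)\}$ with $P_t(i)=\sum_{j\in N^{\mathrm{in}}(i)}p_t(j)$,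 and $q_{t+1}(i)=\frac{q_t(i)\exp(-\eta\hat\ell_t(i))}{\sum_{j}q_t(j)\exp(-\eta\hat\ell_t(j))}$. *)

(* Defs.v *)
From HB Require Import structures.
From mathcomp Require Import all_boot all_order all_algebra.
From mathcomp Require Import reals.
From mathcomp Require Import sequences exp.
Set Implicit Arguments. Unset Strict Implicit. Unset Printing Implicit Defensive.
Import Order.TTheory GRing.Theory Num.Theory.
Local Open Scope ring_scope.

Section Exp3G.
Variable R : realType.
Variable V : finType.

Definition loopless_clique (K : nat) : rel 'I_K := fun i j => i != j.

Definition N_in (E : rel V) (i : V) : {set V} := [set j | E j i].
Definition N_out (E : rel V) (i : V) : {set V} := [set j | E i j].

Definition unif (U : {set V}) : V -> R :=
  fun i => if i \in U then (#|U|%:R)^-1 else 0.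

Definition exp3g_p (U : {set V}) (gamma : R) (q : V -> R) : V -> R :=
  fun i => (1 - gamma) * q i + gamma * unif U i.

Definition obs_prob (E : rel V) (p : V -> R) (i : V) : R :=
  \sum_(j in N_in E i) p j.

Definition loss_est (E : rel V) (p : V -> R) (lt : V -> R) (It : V) : V -> R :=
  fun i => if i \in N_out E It then lt i / obs_prob E p i else 0.

Definition ew_update (eta : R) (q : V -> R) (lh : V -> R) : V -> R :=
  fun i => q i * expR (- eta * lh i) / \sum_j q j * expR (- eta * lh j).

(* Expected cumulative loss of Exp3.G over rounds t, t+1, ..., t+n-1 when its
   current weight distribution is q (losses fixed in advance: ell t i is the
   loss of action i at round t).  The expectation is over the draws
   I_t ~ p_t, computed exactly by summing over the finitely many histories. *)
Fixpoint exp3g_exp_loss (E : rel V) (eta : R) (U : {set V}) (gamma : R)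
    (ell : nat -> V -> R) (n t : nat) (q : V -> R) : R :=
  match n with
  | 0 => 0
  | n'.+1 =>
      let p := exp3g_p U gamma q in
      \sum_(i : V) p i *
        (ell t i +
         exp3g_exp_loss E eta U gamma ell n' t.+1
           (ew_update eta q (loss_est E p (ell t) i)))
  end.

Definition q_init : V -> R := fun _ => (#|V|%:R)^-1.

Definition cum_loss (ell : nat -> V -> R) (T : nat) (i : V) : R :=
  \sum_(t < T) ell t i.

End Exp3G.

(* Main.v *)
Require Import Defs.
From HB Require Import structures.
From mathcomp Require Import all_boot all_order all_algebra.
From mathcomp Require Import all_classical all_reals all_analysis.
From mathcomp Require Import ring lra.
Import Order.TTheory GRing.Theory Num.Theory.
Import numFieldNormedType.Exports.
Local Open Scope ring_scope.

Lemma ln_le_sub1 (R : realType) (y : R) : 0 < y -> ln y <= y - 1.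
Proof.
move=> y0; have := @le_ln1Dx R (y - 1).
rewrite (_ : 1 + (y - 1) = y); last by ring.
apply; lra.
Qed.

Lemma pw (R : realType) (V : finType) (q : V -> R) (lh : V -> R) (eta : R) (k s : V) (w : V -> R) :
 (forall i, 0 < q i) -> \sum_i q i = 1 -> 0 < eta ->
 (forall i, expR (- (eta * (lh i - lh s))) <= 1 - eta * (lh i - lh s) + eta ^+ 2 * w i) ->
 - ln (ew_update eta q lh k) / eta <=
   - ln (q k) / eta + lh k - \sum_i q i * lh i + eta * \sum_i q i * w i.
Proof.
move=> qpos qsum eta0 H.
set c := lh s.
pose Y := \sum_i q i * expR (- (eta * (lh i - c))).
have eE i : expR (- (eta * (lh i - c))) = expR (- eta * lh i) * expR (eta * c).
  by rewrite -expRD; congr expR; ring.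
have Y0 : 0 < Y.
  rewrite /Y (bigD1 k) //= ltr_pwDl //; first by rewrite mulr_gt0 ?expR_gt0.
  by apply: sumr_ge0 => i _; rewrite mulr_ge0 ?expR_ge0 // ltW.
have Z0 : 0 < \sum_j q j * expR (- eta * lh j).
  rewrite (bigD1 k) //= ltr_pwDl //; first by rewrite mulr_gt0 ?expR_gt0.
  by apply: sumr_ge0 => i _; rewrite mulr_ge0 ?expR_ge0 // ltW.
have upE : ew_update eta q lh k = q k * expR (- (eta * (lh k - c))) / Y.
  rewrite /ew_update /Y eE.
  under [in RHS]eq_bigr => i _ do rewrite eE mulrA.
  rewrite -mulr_suml mulrA -mulf_div divff ?mulr1 //.
  by rewrite gt_eqF ?expR_gt0.
have lnE : ln (ew_update eta q lh k) = ln (q k) - eta * (lh k - c) - ln Y.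
  rewrite upE ln_div ?lnM ?expRK //; rewrite ?posrE ?mulr_gt0 ?expR_gt0 //.
have Yle : Y <= 1 - eta * (\sum_i q i * lh i - c) + eta ^+ 2 * \sum_i q i * w i.
  rewrite /Y.
  apply: le_trans (_ : \sum_i q i * (1 - eta * (lh i - c) + eta ^+ 2 * w i) <= _).
    apply: ler_sum => i _; rewrite ler_wpM2l // ltW //.
  rewrite le_eqVlt; apply/orP; left; apply/eqP.
  rewrite (eq_bigr (fun i => q i + (- eta) * (q i * lh i) + (eta * c) * q i + eta ^+ 2 * (q i * w i))); last by move=> i _; ring.
  rewrite !big_split /= -!mulr_sumr qsum; ring.
have lnY := @ln_le_sub1 R Y Y0.
have hY : ln Y / eta <= - (\sum_i q i * lh i - c) + eta * \sum_i q i * w i.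
  rewrite ler_pdivrMr //.
  have -> : (- (\sum_i q i * lh i - c) + eta * \sum_i q i * w i) * eta =
    - eta * (\sum_i q i * lh i - c) + eta ^+ 2 * \sum_i q i * w i by ring.
  lra.
rewrite lnE.
have -> : - (ln (q k) - eta * (lh k - c) - ln Y) / eta = - ln (q k) / eta + (lh k - c) + ln Y / eta.
  by field; rewrite gt_eqF.
lra.
Qed.
Section PolyExp.
Local Open Scope classical_set_scope.
Lemma polyexp_mvt (R : realType) (p : {poly R}) (a b : R) : a <= b ->
  exists2 c, c \in `[a, b]%R &
   p.[b] * expR b - p.[a] * expR a = (p.[c] + (deriv p).[c]) * expR c * (b - a).
Proof.
move=> ab.
have D (x : R) : is_derive x (1:R) (horner p * expR) ((p.[x] + (deriv p).[x]) * expR x).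
  have H := is_deriveM (is_derive_poly p x) (is_derive_expR x).
  have E : p.[x] *: expR x + expR x *: (deriv p).[x] = (p.[x] + (deriv p).[x]) * expR x.
    by rewrite /GRing.scale /= mulrDl [expR x * _]mulrC.
  by rewrite -E.
have := @MVT_segment R (horner p * expR) (fun x => (p.[x] + (deriv p).[x]) * expR x) a b ab.
have H1 : forall x, x \in `]a, b[%R -> is_derive x 1 (horner p * expR) ((p.[x] + (deriv p).[x]) * expR x).
  by move=> x _; apply: D.
have H2 : {within `[a, b], continuous (horner p * expR)}.
  apply: derivable_within_continuous => x _.
  exact: (@ex_derive _ _ _ _ _ _ _ (D x)).
move=> /(_ H1 H2) [c cab E].
by exists c.
Qed.

End PolyExp.

Lemma expN_le_pos (R : realType) (x : R) : 0 <= x -> expR (- x) <= 1 - x + x ^+ 2 / 2.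
Proof.
move=> x0.
pose p : {poly R} := 1 - 'X + (2^-1 : R) *: 'X^2.
have [c cab E] := @polyexp_mvt R p 0 x x0.
have hp y : p.[y] = 1 - y + y ^+ 2 / 2.
  by rewrite /p !hornerE /=; ring.
have hd y : (deriv p).[y] = - 1 + y.
  rewrite /p !(derivD, derivN, derivZ, derivC, derivX, derivXn) !hornerE /=.
  lra.
move: E; rewrite !hp !hd expR0 subr0 => E.
have : 0 <= (1 - x + x ^+ 2 / 2) * expR x - 1.
  have -> : (1 - x + x ^+ 2 / 2) * expR x - 1 = (1 - x + x ^+ 2 / 2) * expR x - (1 + 0 ^+ 2 / 2) * 1.
    by ring.
  rewrite E subr0; apply: mulr_ge0 => //; apply: mulr_ge0; last exact: expR_ge0.
  have -> : 1 - c + c ^+ 2 / 2 + (-1 + c) = c ^+ 2 / 2 by ring.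
  by rewrite divr_ge0 // sqr_ge0.
rewrite subr_ge0 expRN => H.
by rewrite -(mul1r (expR x)^-1) ler_pdivrMr ?expR_gt0.
Qed.

Lemma expN_le_neg (R : realType) (x : R) : -1 <= x -> x <= 0 -> expR (- x) <= 1 - x + x ^+ 2.
Proof.
move=> x1 x0.
pose p : {poly R} := 1 - 'X + 'X^2.
have [c cab E] := @polyexp_mvt R p x 0 x0.
have hp y : p.[y] = 1 - y + y ^+ 2.
  by rewrite /p !hornerE /=; ring.
have hd y : (deriv p).[y] = - 1 + y *+ 2.
  by rewrite /p !(derivD, derivN, derivZ, derivC, derivX, derivXn) !hornerE /=.
move: E; rewrite !hp !hd expR0 => E.
have hc : x <= c <= 0 by move: cab; rewrite in_itv.
have : 0 <= (1 - x + x ^+ 2) * expR x - 1.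
  have -> : (1 - x + x ^+ 2) * expR x - 1 = - ((1 - 0 + 0 ^+ 2) * 1 - (1 - x + x ^+ 2) * expR x).
    by ring.
  rewrite E oppr_ge0.
  have -> : (1 - c + c ^+ 2 + (-1 + c *+ 2)) * expR c * (0 - x) = ((c + c ^+ 2) * (- x)) * expR c by ring.
  apply: mulr_le0_ge0; last exact: expR_ge0.
  nra.
rewrite subr_ge0 expRN => H.
by rewrite -(mul1r (expR x)^-1) ler_pdivrMr ?expR_gt0.
Qed.

Lemma exp_shift (R : realType) (A B eta : R) : 0 <= A -> 0 <= B -> 0 <= eta -> eta * B <= 1 ->
  expR (- (eta * (A - B))) <= 1 - eta * (A - B) + eta ^+ 2 * (A ^+ 2 / 2 + B ^+ 2).
Proof.
move=> A0 B0 e0 eB.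
case: (leP B A) => h.
- have x0 : 0 <= eta * (A - B) by rewrite mulr_ge0 // subr_ge0.
  apply: (le_trans (@expN_le_pos R _ x0)).
  rewrite lerD2l.
  have : (eta * (A - B)) ^+ 2 <= (eta * A) ^+ 2.
    rewrite ler_sqr ?nnegrE //; last by rewrite mulr_ge0.
    by rewrite ler_wpM2l // lerBlDr lerDl.
  have -> : (eta * A) ^+ 2 = eta ^+ 2 * A ^+ 2 by ring.
  have : 0 <= eta ^+ 2 * B ^+ 2 by rewrite mulr_ge0 // sqr_ge0.
  move=> h1 h2.
  have -> : eta ^+ 2 * (A ^+ 2 / 2 + B ^+ 2) = eta ^+ 2 * A ^+ 2 / 2 + eta ^+ 2 * B ^+ 2 by ring.
  lra.
- have x1 : -1 <= eta * (A - B).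
    have : eta * A >= 0 by rewrite mulr_ge0.
    have -> : eta * (A - B) = eta * A - eta * B by ring.
    lra.
  have x0 : eta * (A - B) <= 0 by rewrite mulr_ge0_le0 // subr_le0 ltW.
  apply: (le_trans (@expN_le_neg R _ x1 x0)).
  rewrite lerD2l.
  have : (eta * (A - B)) ^+ 2 <= (eta * B) ^+ 2.
    rewrite -sqrrN ler_sqr ?nnegrE //; last by rewrite mulr_ge0.
      by rewrite -mulrN ler_wpM2l // opprB lerBlDr lerDl.
    by rewrite -mulrN mulr_ge0 // opprB subr_ge0 ltW.
  have -> : (eta * B) ^+ 2 = eta ^+ 2 * B ^+ 2 by ring.
  have : 0 <= eta ^+ 2 * A ^+ 2 by rewrite mulr_ge0 // sqr_ge0.
  move=> h1 h2.
  have -> : eta ^+ 2 * (A ^+ 2 / 2 + B ^+ 2) = eta ^+ 2 * A ^+ 2 / 2 + eta ^+ 2 * B ^+ 2 by ring.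
  lra.
Qed.

Lemma sum_ne (R : realType) (V : finType) (p : V -> R) (i : V) (a : R) :
  \sum_I p I * (if I != i then a else 0) = (\sum_I p I - p i) * a.
Proof.
rewrite (bigD1 i) //= eqxx mulr0 add0r.
rewrite [in RHS](bigD1 i) //= addrAC subrr add0r mulr_suml.
by apply: eq_bigr => I ->.
Qed.

Lemma two_le_sum (R : realType) (V : finType) (p : V -> R) (i j : V) :
  (forall I, 0 <= p I) -> i != j -> p i + p j <= \sum_I p I.
Proof.
move=> p0 ij.
rewrite (bigD1 i) //= lerD2l (bigD1 j) //=; last by rewrite eq_sym.
rewrite lerDl; apply: sumr_ge0 => I _; exact: p0.
Qed.

Lemma obsE (R : realType) (K : nat) (p : 'I_K -> R) (i : 'I_K) :
  obs_prob (@loopless_clique K) p i = \sum_j p j - p i.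
Proof.
rewrite /obs_prob /N_in [in RHS](bigD1 i) //= addrAC subrr add0r.
by apply: eq_bigl => j; rewrite inE.
Qed.

Lemma lestE (R : realType) (K : nat) (p l : 'I_K -> R) (I i : 'I_K) :
  loss_est (@loopless_clique K) p l I i =
  if I != i then l i / (\sum_j p j - p i) else 0.
Proof. by rewrite /loss_est /N_out inE obsE. Qed.


Lemma argmax_ex (R : realType) (V : finType) (p : V -> R) (k : V) :
  exists s, forall i, p i <= p s.
Proof.
have [s _ H] := @arg_maxP _ _ V k xpredT p isT.
by exists s => i; apply: H.
Qed.

Lemma step (R : realType) (K : nat) (eta gamma : R) (q l : 'I_K -> R) (k : 'I_K) :
 (2 <= K)%N -> 0 < eta -> gamma = 2 * eta -> gamma <= 1 ->
 (forall i, 0 < q i) -> \sum_i q i = 1 -> (forall i, 0 <= l i <= 1) ->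
 \sum_I exp3g_p [set: 'I_K] gamma q I *
    (l I + - ln (ew_update eta q (loss_est (@loopless_clique K) (exp3g_p [set: 'I_K] gamma q) l I) k) / eta)
  <= l k + - ln (q k) / eta + (gamma + 3 * eta).
Proof.
move=> K2 e0 gE g1 q0 qs l01.
set p := exp3g_p _ gamma q.
have K2R : 2 <= K%:R :> R by rewrite (ler_nat R 2 K).
have KR0 : 0 < K%:R :> R by lra.
have pE i : p i = (1 - gamma) * q i + gamma / K%:R.
  by rewrite /p /exp3g_p /unif inE cardsT card_ord.
have q1 i : q i <= 1.
  rewrite -qs (bigD1 i) //= lerDl; apply: sumr_ge0 => j _; exact: ltW.
have gK : gamma / K%:R <= gamma / 2.
  set x := gamma / K%:R.
  have hx : x * K%:R = gamma by rewrite /x divfK ?gt_eqF.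
  have x0 : 0 <= x by rewrite /x divr_ge0 // ltW //; lra.
  rewrite ler_pdivlMr //; nra.
have p0 i : 0 <= p i.
  rewrite pE; apply: addr_ge0; first by apply: mulr_ge0; [lra | exact: ltW].
  by rewrite divr_ge0 //; lra.
have ps : \sum_i p i = 1.
  under eq_bigr => i _ do rewrite pE.
  rewrite big_split /= -mulr_sumr qs sumr_const card_ord -[_ *+ K]mulr_natr divfK ?gt_eqF //.
  ring.
have pmax i : p i <= 1 - eta.
  rewrite pE; have := q1 i; have := q0 i; nra.
set lh := fun I => loss_est (@loopless_clique K) p l I.
have lhE I i : lh I i = if I != i then l i / (1 - p i) else 0.
  by rewrite /lh lestE ps.
have P0 i : 0 < 1 - p i by have := pmax i; lra.
have lh0 I i : 0 <= lh I i.
  rewrite lhE; case: ifP => // _; rewrite divr_ge0 //; last exact: ltW.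
  by case/andP: (l01 i).
have [s smax] := @argmax_ex R _ p k.
have ls1 I : eta * lh I s <= 1.
  rewrite lhE; case: ifP => _; last by rewrite mulr0.
  rewrite mulrA ler_pdivrMr // mul1r.
  have := pmax s; case/andP: (l01 s) => l0 l1.
  have : eta * l s <= eta by rewrite ler_piMr // ltW.
  lra.
pose w I i := if i == s then 0 else lh I i ^+ 2 / 2 + lh I s ^+ 2.
have PW I : - ln (ew_update eta q (lh I) k) / eta <=
    - ln (q k) / eta + lh I k - \sum_i q i * lh I i + eta * \sum_i q i * w I i.
  apply: (@pw R _ q (lh I) eta k s (w I) q0 qs e0) => i.
  rewrite /w; case: eqP => [->|_].
    by rewrite subrr !mulr0 oppr0 expR0 !addr0.
  exact: exp_shift (lh0 I i) (lh0 I s) (ltW e0) (ls1 I).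
apply: le_trans (_ : \sum_I p I * (l I + (- ln (q k) / eta + lh I k - \sum_i q i * lh I i + eta * \sum_i q i * w I i)) <= _).
  apply: ler_sum => I _; apply: ler_wpM2l; first exact: p0.
  rewrite lerD2l; exact: PW I.
have U i : \sum_I p I * lh I i = l i.
  under eq_bigr => I _ do rewrite lhE.
  by rewrite sum_ne ps mulrC divfK ?gt_eqF.
have X : \sum_I p I * \sum_i q i * lh I i = \sum_i q i * l i.
  under eq_bigr => I _ do rewrite mulr_sumr.
  rewrite exchange_big /=; apply: eq_bigr => i _.
  under eq_bigr => I _ do rewrite mulrCA.
  by rewrite -mulr_sumr U.
have L : \sum_I p I * l I - \sum_i q i * l i <= gamma.
  have Sl : \sum_i l i <= K%:R.
    apply: le_trans (_ : \sum_(i : 'I_K) (1 : R) <= _).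
      by apply: ler_sum => i _; case/andP: (l01 i).
    by rewrite sumr_const card_ord.
  have ql : 0 <= \sum_i q i * l i.
    apply: sumr_ge0 => i _; apply: mulr_ge0; [exact: ltW | by case/andP: (l01 i)].
  rewrite (eq_bigr (fun I => (1 - gamma) * (q I * l I) + gamma / K%:R * l I)); last first.
    by move=> I _; rewrite pE; ring.
  rewrite big_split /= -!mulr_sumr.
  set x := gamma / K%:R.
  have hx : x * K%:R = gamma by rewrite /x divfK ?gt_eqF.
  have x0 : 0 <= x by rewrite /x divr_ge0 // ltW //; lra.
  have g0 : 0 <= gamma by lra.
  nra.
have sqif (b : bool) (a : R) : (if b then a else 0) ^+ 2 = if b then a ^+ 2 else 0.
  by case: b => //; rewrite expr2 mulr0.
have Sq j : \sum_I p I * lh I j ^+ 2 = l j ^+ 2 / (1 - p j).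
  under eq_bigr => I _ do rewrite lhE sqif.
  rewrite sum_ne ps; field; rewrite gt_eqF //.
have Wi i : \sum_I p I * w I i = if i == s then 0 else l i ^+ 2 / (1 - p i) / 2 + l s ^+ 2 / (1 - p s).
  rewrite /w; case: eqP => _; first by rewrite big1 // => I _; rewrite mulr0.
  rewrite -Sq -Sq mulr_suml -big_split /=; apply: eq_bigr => I _; ring.
have Wb : \sum_I p I * \sum_i q i * w I i <= 3.
  have -> : \sum_I p I * \sum_i q i * w I i = \sum_i q i * \sum_I p I * w I i.
    under eq_bigr => I _ do rewrite mulr_sumr.
    rewrite exchange_big /=; apply: eq_bigr => i _.
    under eq_bigr => I _ do rewrite mulrCA.
    by rewrite -mulr_sumr.
  apply: le_trans (_ : \sum_i q i * (if i == s then 0 else 1 + 1 / (1 - p s)) <= _).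
    apply: ler_sum => i _; rewrite Wi; apply: ler_wpM2l; first exact: ltW.
    case: eqP => // /eqP ns.
    apply: lerD.
      have h2 := @two_le_sum R _ p i s p0 ns; rewrite ps in h2.
      have := smax i; have := P0 i; case/andP: (l01 i) => l0 l1 => h3 h4.
      rewrite ler_pdivrMr // mul1r ler_pdivrMr //.
      nra.
    apply: ler_wpM2r; first by rewrite invr_ge0 ltW.
    by case/andP: (l01 s) => l0 l1; nra.
  rewrite (bigD1 s) //= eqxx mulr0 add0r.
  rewrite (eq_bigr (fun i => q i * (1 + 1 / (1 - p s)))); last first.
    by move=> i /negbTE ->.
  rewrite -mulr_suml.
  have -> : \sum_(i < K | i != s) q i = 1 - q s.
    by have := qs; rewrite (bigD1 s) //= => h; lra.
  have qs1 := q1 s; have qs0 := q0 s; have Ps := P0 s.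
  have hr : (1 - q s) / (1 - p s) <= 2.
    rewrite ler_pdivrMr //.
    move: Ps; rewrite pE => Ps.
    set x := gamma / K%:R in gK Ps *.
    have g0 : 0 <= gamma by lra.
    nra.
  have -> : (1 - q s) * (1 + 1 / (1 - p s)) = (1 - q s) + (1 - q s) / (1 - p s) by ring.
  lra.
rewrite (eq_bigr (fun I => p I * l I + (- ln (q k) / eta) * p I + p I * lh I k
   - p I * \sum_i q i * lh I i + eta * (p I * \sum_i q i * w I i))); last first.
  by move=> I _; ring.
rewrite !big_split /= sumrN -mulr_sumr -mulr_sumr ps U X.
have : eta * \sum_i p i * \sum_i0 q i0 * w i i0 <= eta * 3 by rewrite ler_wpM2l // ltW.
lra.
Qed.

Lemma ew_pos (R : realType) (V : finType) (eta : R) (q lh : V -> R) (k : V) :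
  (forall i, 0 < q i) ->
  (forall i, 0 < ew_update eta q lh i) /\ \sum_i ew_update eta q lh i = 1.
Proof.
move=> q0.
have Z0 : 0 < \sum_j q j * expR (- eta * lh j).
  rewrite (bigD1 k) //= ltr_pwDl //; first by rewrite mulr_gt0 ?expR_gt0.
  by apply: sumr_ge0 => i _; rewrite mulr_ge0 ?expR_ge0 // ltW.
split.
  by move=> i; rewrite /ew_update divr_gt0 // mulr_gt0 ?expR_gt0.
by rewrite /ew_update -mulr_suml divff // gt_eqF.
Qed.

Lemma ind (R : realType) (K : nat) (eta gamma : R) (ell : nat -> 'I_K -> R) (k : 'I_K) (T : nat) :
 (2 <= K)%N -> 0 < eta -> gamma = 2 * eta -> gamma <= 1 ->
 (forall t i, (t < T)%N -> 0 <= ell t i <= 1) ->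
 forall n t q, (t + n <= T)%N -> (forall i, 0 < q i) -> \sum_i q i = 1 ->
 exp3g_exp_loss (@loopless_clique K) eta [set: 'I_K] gamma ell n t q <=
  \sum_(s < n) ell (t + s)%N k + - ln (q k) / eta + n%:R * (gamma + 3 * eta).
Proof.
move=> K2 e0 gE g1 l01; elim=> [|n IH] t q tn q0 qs.
  rewrite /= big_ord0 mul0r add0r addr0.
  have qk1 : q k <= 1.
    rewrite -qs (bigD1 k) //= lerDl; apply: sumr_ge0 => j _; exact: ltW.
  rewrite divr_ge0 ?(ltW e0) // oppr_ge0 ln_le0 //.
rewrite /=.
set p := exp3g_p _ gamma q.
set B := gamma + 3 * eta.
set A := fun I => ew_update eta q (loss_est (@loopless_clique K) p (ell t) I).
have H I : exp3g_exp_loss (@loopless_clique K) eta [set: 'I_K] gamma ell n t.+1 (A I) <=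
   \sum_(s < n) ell (t.+1 + s)%N k + - ln (A I k) / eta + n%:R * B.
  have [A0 As] := @ew_pos R _ eta q (loss_est (@loopless_clique K) p (ell t) I) k q0.
  apply: IH => //; by rewrite addSnnS.
have p0 I : 0 <= p I.
  rewrite /p /exp3g_p /unif inE; apply: addr_ge0.
    by apply: mulr_ge0; [lra | exact: ltW].
  by rewrite mulr_ge0 ?invr_ge0 //; lra.
have ps : \sum_i p i = 1.
  rewrite /p /exp3g_p /unif.
  under eq_bigr => i _ do rewrite inE.
  rewrite big_split /= -!mulr_sumr qs sumr_const cardsT card_ord.
  rewrite -[_ *+ K]mulr_natr mulVf ?pnatr_eq0 -?lt0n ?(ltn_trans _ K2) //.
  ring.
have tT : (t < T)%N by apply: leq_trans tn; rewrite -addSnnS leq_addr.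
have ST := @step R K eta gamma q (ell t) k K2 e0 gE g1 q0 qs (fun i => l01 t i tT).
apply: le_trans (_ : \sum_I p I * (ell t I + - ln (A I k) / eta +
     (\sum_(s < n) ell (t.+1 + s)%N k + n%:R * B)) <= _).
  apply: ler_sum => I _; apply: ler_wpM2l => //.
  have := H I; lra.
rewrite (eq_bigr (fun I => p I * (ell t I + - ln (A I k) / eta) +
     (\sum_(s < n) ell (t.+1 + s)%N k + n%:R * B) * p I)); last by move=> I _; ring.
rewrite big_split /= -mulr_sumr ps mulr1.
rewrite big_ord_recl /= addn0.
have -> : \sum_(i < n) ell (t + bump 0 i)%N k = \sum_(s < n) ell (t.+1 + s)%N k.
  by apply: eq_bigr => i _; rewrite /bump /= add1n addSnnS.
rewrite -[n.+1]addn1 natrD.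
move: ST; rewrite -/p -/B => ST.
lra.
Qed.

Theorem theorem3 (R : realType) (K T : nat) (ell : nat -> 'I_K -> R) :
  (2 <= K)%N -> (0 < T)%N ->
  2 * Num.sqrt (ln (K%:R : R) / (2 * T%:R)) <= 1 ->
  (forall t i, (t < T)%N -> 0 <= ell t i <= 1) ->
  let eta : R := Num.sqrt (ln (K%:R) / (2 * T%:R)) in
  let gamma := 2 * eta in
  forall i : 'I_K,
    exp3g_exp_loss (@loopless_clique K) eta [set: 'I_K] gamma ell T 0
      (@q_init R _) - cum_loss ell T i
    <= 5 * Num.sqrt (T%:R * ln (K%:R)).
Proof.
move=> K2 T0 g1 l01 eta gamma k.
have K2R : 2 <= K%:R :> R by rewrite (ler_nat R 2 K).
have KR0 : 0 < K%:R :> R by lra.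
have TR0 : 0 < T%:R :> R by rewrite ltr0n.
have L0 : 0 < ln (K%:R : R) by apply: ln_gt0; lra.
have e0 : 0 < eta by rewrite /eta sqrtr_gt0 divr_gt0 // mulr_gt0.
have e2 : eta ^+ 2 = ln (K%:R) / (2 * T%:R) by rewrite /eta sqr_sqrtr // divr_ge0 // ?ltW // mulr_ge0 // ltW.
have qi0 : forall j, 0 < @q_init R 'I_K j by move=> j; rewrite /q_init card_ord invr_gt0.
have qis : \sum_j @q_init R 'I_K j = 1.
  rewrite /q_init sumr_const !card_ord -[_ *+ K]mulr_natr mulVf // gt_eqF //.
have := @ind R K eta gamma ell k T K2 e0 erefl g1 l01 T 0 (@q_init R _) (leqnn _) qi0 qis.
rewrite /q_init card_ord lnV ?posrE // opprK.
have -> : \sum_(s < T) ell (0 + s)%N k = cum_loss ell T k by [].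
move=> H.
have LE : ln (K%:R : R) = 2 * T%:R * eta ^+ 2 by rewrite e2; field; rewrite gt_eqF.
have Le : ln (K%:R : R) / eta = 2 * T%:R * eta by rewrite LE; field; rewrite gt_eqF.
set S := Num.sqrt (T%:R * ln (K%:R : R)).
have S0 : 0 <= S by rewrite sqrtr_ge0.
have S2 : S ^+ 2 = 2 * (T%:R * eta) ^+ 2.
  rewrite /S sqr_sqrtr; last by rewrite mulr_ge0 // ltW.
  by rewrite LE; ring.
have x0 : 0 <= T%:R * eta by rewrite mulr_ge0 // ltW.
have key : 7 * (T%:R * eta) <= 5 * S.
  have h7 : 0 <= 7 * (T%:R * eta) by rewrite mulr_ge0.
  have h5 : 0 <= 5 * S by rewrite mulr_ge0.
  rewrite -(@ler_pXn2r _ 2) ?nnegrE //.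
  by rewrite !exprMn S2; nra.
move: H; rewrite Le /gamma.
lra.
Qed.
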